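(* Let $n\ge 2$ and let $v_1,\ldots,v_n$ be positive integers with $\gcd(v_1,\ldots,v_n)=1$. Then every local maximum of the function $f(t)=\min_{1\le i\le n}\Vert t v_i\Vert$ on $\mathbb{R}$ occurs at a time of the form $t_0=\frac{m}{v_i+v_j}$, where $1\le i<j\le n$ and $m$ is an integer.
   Context: For a real number $x$, $\Vert x\Vert$ denotes the distance from $x$ to the nearest integer. *)

(* Defs.v *)
From HB Require Import structures.
From mathcomp Require Import all_boot all_order all_algebra.
From mathcomp Require Import reals.
Set Implicit Arguments. Unset Strict Implicit. Unset Printing Implicit Defensive.
Import Order.TTheory GRing.Theory Num.Theory.
Local Open Scope ring_scope.

(* ||x|| : distance from x to the nearest integer.  The nearest integer is
   either floor x or floor x + 1. *)
Definition dist_int (R : realType) (x : R) : R :=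
  Num.min (x - (Num.floor x)%:~R) ((Num.floor x)%:~R + 1 - x).

(* f(t) = min_{i < n} || t v_i ||.  The neutral element 1 is irrelevant for
   n >= 1, since every || . || is <= 1/2. *)
Definition fmin (R : realType) (n : nat) (v : 'I_n -> nat) (t : R) : R :=
  \big[Num.min/1]_(i < n) dist_int (t * (v i)%:R).

Definition local_max (R : realType) (g : R -> R) (t : R) : Prop :=
  exists2 e : R, 0 < e & forall s : R, `|s - t| < e -> g s <= g t.

(* Main.v *)
Require Import Defs.
From HB Require Import structures.
From mathcomp Require Import all_boot all_order all_algebra.
From mathcomp Require Import reals.
From mathcomp Require Import lra zify ring.
Import Order.TTheory GRing.Theory Num.Theory.
Local Open Scope ring_scope.

Section Aux.
Variable R : realType.

Lemma absE (y : R) : (0 <= y /\ `|y| = y) \/ (y < 0 /\ `|y| = - y).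
Proof.
case: (lerP 0 y) => hy; [left; split => //; exact: ger0_norm
                        | right; split => //; exact: ltr0_norm].
Qed.

Lemma di_le (x : R) (m : int) : dist_int x <= `|x - m%:~R|.
Proof.
rewrite /dist_int.
have /andP[h1 h2] := floor_itv x.
set k := Num.floor x in h1 h2 *.
rewrite intrD in h2.
case: (lerP m k) => hm.
- have hm' : (m%:~R : R) <= k%:~R by rewrite ler_int.
  rewrite ger0_norm; last lra.
  rewrite ge_min; apply/orP; left; lra.
- have hm' : ((k + 1)%:~R : R) <= m%:~R by rewrite ler_int; lia.
  rewrite intrD in hm'.
  rewrite ltr0_norm; last lra.
  rewrite ge_min; apply/orP; right; lra.
Qed.

Lemma di_eq (x : R) : exists m : int, dist_int x = `|x - m%:~R|.
Proof.
rewrite /dist_int.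
have /andP[h1 h2] := floor_itv x.
set k := Num.floor x in h1 h2 *.
rewrite intrD in h2.
rewrite minEle; case: ifP => _.
- exists k; rewrite ger0_norm //; lra.
- exists (k + 1); rewrite intrD ltr0_norm; [ring | lra].
Qed.

Lemma di_half (x : R) : dist_int x <= 1/2.
Proof.
rewrite /dist_int ge_min.
case: (lerP (x - (Num.floor x)%:~R) (1/2)) => h; apply/orP; [left|right]; lra.
Qed.

Lemma di_ge0 (x : R) : 0 <= dist_int x.
Proof. have [m ->] := di_eq x; exact: normr_ge0. Qed.

Lemma di_lip (x y : R) : dist_int y <= dist_int x + `|y - x|.
Proof.
have [m hm] := di_eq x.
apply: le_trans (di_le y m) _.
have := ler_normD (y - x) (x - m%:~R).
have -> : y - x + (x - m%:~R) = y - m%:~R by ring.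
rewrite hm; lra.
Qed.

Lemma bigmin_le_seq (I : eqType) (s : seq I) (F : I -> R) j :
  j \in s -> \big[Num.min/1]_(i <- s) F i <= F j.
Proof.
elim: s => [//|a s IH]; rewrite in_cons big_cons ge_min.
case/orP => [/eqP -> | hj]; first by rewrite lexx.
by rewrite IH // orbT.
Qed.

Lemma bigmin_le n (F : 'I_n -> R) j : \big[Num.min/1]_(i < n) F i <= F j.
Proof. exact: bigmin_le_seq (mem_index_enum j). Qed.

Lemma bigmin_gt n (F : 'I_n -> R) c :
  c < 1 -> (forall i, c < F i) -> c < \big[Num.min/1]_(i < n) F i.
Proof.
move=> h1 hF; apply: (big_ind (fun x => c < x)) => //.
by move=> x y hx hy; rewrite lt_min hx hy.
Qed.

Lemma bigmin_ge n (F : 'I_n -> R) c :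
  c <= 1 -> (forall i, c <= F i) -> c <= \big[Num.min/1]_(i < n) F i.
Proof.
move=> h1 hF; apply: (big_ind (fun x => c <= x)) => //.
by move=> x y hx hy; rewrite le_min hx hy.
Qed.

End Aux.

Lemma push (R : realType) n (v : 'I_n -> nat) (hpos : forall i, (0 < v i)%N)
  (t e : R) (he : 0 < e)
  (hloc : forall s, `|s - t| < e -> fmin v s <= fmin v t)
  (sg : R) (hsg : sg = 1 \/ sg = -1) (hc2 : fmin v t < 1/2)
  (H : forall i, dist_int (t * (v i)%:R) = fmin v t ->
        exists m : int, t * (v i)%:R - m%:~R = sg * fmin v t) : False.
Proof.
set c := fmin v t in hloc hc2 H.
have hc0 : 0 <= c by apply: bigmin_ge => // i; exact: di_ge0.
have hci : forall i, c <= dist_int (t * (v i)%:R) by move=> i; exact: bigmin_le.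
pose w i := if c < dist_int (t * (v i)%:R) then dist_int (t * (v i)%:R) - c
            else 1 - 2 * c.
have hw : forall i, 0 < w i.
  by move=> i; rewrite /w; case: ifP => h; lra.
pose mu := \big[Num.min/1]_(i < n) w i.
have hmu : 0 < mu by apply: bigmin_gt => //; lra.
have hmuw : forall i, mu <= w i by move=> i; exact: bigmin_le.
pose V : R := (\max_(i < n) v i)%:R + 1.
have hvV : forall i, (v i)%:R <= V - 1.
  by move=> i; rewrite /V addrK ler_nat leq_bigmax.
have hV1 : 1 <= V by rewrite /V; have := ler0n R (\max_(i < n) v i); lra.
pose M := Num.min e mu.
have hM0 : 0 < M by rewrite lt_min he hmu.
have hMe : M <= e by rewrite ge_min lexx.
have hMmu : M <= mu by rewrite ge_min lexx orbT.
pose d := M / (2 * V).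
have hV0 : 2 * V != 0 by apply/eqP; lra.
have hdV : d * (2 * V) = M by rewrite /d divfK.
have hd0 : 0 < d by rewrite /d divr_gt0 //; lra.
clearbody d.
have hdV2 : 2 * (d * V) = M by rewrite -hdV; ring.
have hdv : forall i, d * (v i)%:R < w i.
  move=> i; have h1 := hmuw i; have h2 := hvV i.
  have h3 : d * (v i)%:R <= d * V - d.
    by rewrite -{3}[d]mulr1 -mulrBr ler_pM2l.
  move: (w i) (d * (v i)%:R) (d * V) h1 h3 hdV2 => wi x y h1 h3 h4.
  clear -h1 h3 h4 hd0 hMmu hM0; clearbody M; lra.
have hde : d < e.
  have h3 : d <= d * V by rewrite -{1}[d]mulr1 ler_pM2l.
  move: (d * V) h3 hdV2 => y h3 h4.
  clear -h3 h4 hMe hd0; clearbody M; lra.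
clear hmuw hvV hV1 hM0 hMe hMmu hdV hdV2 hV0 hmu.
clearbody mu V M. clear mu V M.
pose s := t + sg * d.
have hst : `|s - t| = d.
  rewrite /s; case: hsg => ->.
    by rewrite addrC addKr mul1r ger0_norm // ltW.
  by rewrite addrC addKr mulN1r normrN ger0_norm // ltW.
have := hloc s; rewrite hst => /(_ hde).
apply/negP; rewrite -ltNge.
apply: bigmin_gt; first lra.
move=> i.
have hvi : (0 : R) < (v i)%:R by rewrite ltr0n.
have hsb : s * (v i)%:R = t * (v i)%:R + sg * (d * (v i)%:R) by rewrite /s; ring.
have hdvi : 0 < d * (v i)%:R by rewrite mulr_gt0.
have := hdv i; rewrite /w.
case: ifP => hlt hdw.
- have := di_lip _ (s * (v i)%:R) (t * (v i)%:R).
  have -> : t * (v i)%:R - s * (v i)%:R = - (sg * (d * (v i)%:R)) by rewrite hsb; ring.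
  rewrite normrN.
  have -> : `|sg * (d * (v i)%:R)| = d * (v i)%:R.
    by case: hsg => ->; rewrite ?mul1r ?mulN1r ?normrN ger0_norm // ltW.
  lra.
- have hact : dist_int (t * (v i)%:R) = c.
    by apply/eqP; rewrite eq_le hci andbT leNgt hlt.
  have [m hm] := H i hact.
  have [m' ->] := di_eq _ (s * (v i)%:R).
  rewrite hsb ltr_normr.
  have [hmm|hmm|hmm] := ltrgtP m' m.
  + have : ((m' + 1)%:~R : R) <= m%:~R by rewrite ler_int; lia.
    rewrite intrD => hmm'.
    by apply/orP; case: hsg => hh; rewrite hh in hm *; [left|left]; lra.
  + have : ((m + 1)%:~R : R) <= m'%:~R by rewrite ler_int; lia.
    rewrite intrD => hmm'.
    by apply/orP; case: hsg => hh; rewrite hh in hm *; [right|right]; lra.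
  + subst m'.
    by apply/orP; case: hsg => hh; rewrite hh in hm *; [left|right]; lra.
Qed.

From Stdlib Require Import Classical.

Lemma conclude (R : realType) n (v : 'I_n -> nat) (hpos : forall i, (0 < v i)%N)
  (t : R) (i j : 'I_n) (m : int) :
  i != j -> t * (v i)%:R + t * (v j)%:R = m%:~R ->
  exists i j : 'I_n, (i < j)%N /\ exists m : int, t = m%:~R / (v i + v j)%:R.
Proof.
move=> hij hm.
have key : forall a b : 'I_n, t * (v a)%:R + t * (v b)%:R = m%:~R ->
    t = m%:~R / (v a + v b)%:R.
  move=> a b hab; rewrite -hab natrD -mulrDr mulfK //.
  by rewrite -natrD pnatr_eq0 addn_eq0 negb_and -!lt0n hpos.
case: (ltngtP i j) => h.
- by exists i, j; split => //; exists m; apply: key.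
- exists j, i; split => //; exists m; apply: key; by rewrite addrC.
- by move: hij; rewrite (val_inj h) eqxx.
Qed.

Theorem proposition4p1 (R : realType) (n : nat) (v : 'I_n -> nat)
  (hn : (2 <= n)%N) (hpos : forall i, (0 < v i)%N)
  (hgcd : \big[gcdn/0%N]_(i < n) v i = 1%N) (t : R) :
  local_max (fmin v) t ->
  exists i j : 'I_n, (i < j)%N /\
    exists m : int, t = m%:~R / (v i + v j)%:R.
Proof.
case=> e he hloc.
have hloc' : forall s, `|s - t| < e -> fmin v s <= fmin v t by [].
set c := fmin v t in hloc'.
have hc0 : 0 <= c by apply: bigmin_ge => // i; exact: di_ge0.
have hci : forall i, c <= dist_int (t * (v i)%:R) by move=> i; exact: bigmin_le.
have h0n : (0 < n)%N by apply: leq_trans hn.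
pose i0 : 'I_n := Ordinal h0n.
pose i1 : 'I_n := Ordinal hn.
have hch : c <= 1/2 by apply: le_trans (hci i0) (di_half _ _).
case: (ltrgtP c (1/2)) => hc2; last first.
-
  have g0 : dist_int (t * (v i0)%:R) = 1/2.
    by apply/eqP; rewrite eq_le di_half -hc2 hci.
  have g1 : dist_int (t * (v i1)%:R) = 1/2.
    by apply/eqP; rewrite eq_le di_half -hc2 hci.
  have [m0 hm0] := di_eq _ (t * (v i0)%:R).
  have [m1 hm1] := di_eq _ (t * (v i1)%:R).
  rewrite g0 in hm0; rewrite g1 in hm1.
  have hne : i0 != i1 by [].
  case: (absE _ (t * (v i0)%:R - m0%:~R)) => [[_ e0]|[_ e0]];
  case: (absE _ (t * (v i1)%:R - m1%:~R)) => [[_ e1]|[_ e1]];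
  rewrite e0 in hm0; rewrite e1 in hm1.
  + apply: (@conclude _ _ _ hpos t _ _ (m0 + m1 + 1) hne); rewrite !intrD; lra.
  + apply: (@conclude _ _ _ hpos t _ _ (m0 + m1) hne); rewrite !intrD; lra.
  + apply: (@conclude _ _ _ hpos t _ _ (m0 + m1) hne); rewrite !intrD; lra.
  + apply: (@conclude _ _ _ hpos t _ _ (m0 + m1 - 1) hne); rewrite !intrD; lra.
- by move: hch; rewrite leNgt hc2.
-
  case: (classic (exists i j : 'I_n, exists m1 m2 : int,
      t * (v i)%:R - m1%:~R = c /\ t * (v j)%:R - m2%:~R = - c /\ c != 0)).
  + case=> i [j [m1 [m2 [h1 [h2 h3]]]]].
    have hij : i != j.
      apply/eqP => hij; subst j.
      have hpos' : (0 : R) < (m2 - m1)%:~R by rewrite intrB; have : c != 0 := h3; rewrite lt0r in hc0 *; lra.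
      have hlt1 : ((m2 - m1)%:~R : R) < (1%:~R) by rewrite intrB; change (1%:~R : R) with (1 : R); lra.
      rewrite ltr0z in hpos'; rewrite ltr_int in hlt1; lia.
    apply: (@conclude _ _ _ hpos t _ _ (m1 + m2) hij); rewrite intrD; lra.
  + move=> hnA; exfalso.
    case: (classic (exists i : 'I_n, exists m : int, t * (v i)%:R - m%:~R = c)).
    * case=> i0' [m0' hm0'].
      apply: (@push _ _ _ hpos t e he hloc' 1) => //; first by left.
      move=> i hact; have [m hm] := di_eq _ (t * (v i)%:R).
      exists m; rewrite mul1r.
      case: (absE _ (t * (v i)%:R - m%:~R)) => [[_ ee]|[_ ee]];
        rewrite -/c hact ee in hm; first by rewrite hm.
      case: (eqVneq c 0) => hc; first by rewrite /c in hc; lra.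
      by exfalso; apply: hnA; exists i0', i, m0', m; split => //; split => //; rewrite /c; lra.
    * move=> hnB.
      apply: (@push _ _ _ hpos t e he hloc' (-1)) => //; first by right.
      move=> i hact; have [m hm] := di_eq _ (t * (v i)%:R).
      exists m; rewrite mulN1r.
      case: (absE _ (t * (v i)%:R - m%:~R)) => [[_ ee]|[_ ee]];
        rewrite -/c hact ee in hm; last lra.
      by exfalso; apply: hnB; exists i, m.
Qed.
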